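(* With $w=-x^{q^n-1}$ and $z=-y^{q^n-1}$ in the basic function field $F$, one has $K(u)=K(z,w)$.
   Context: Standing setup: $p$ is a prime, $q$ a power of $p$, $n\ge2$, $\ell=q^n$, and $K$ is either $\mathbb{F}_\ell$ or its algebraic closure $\overline{\mathbb{F}}_\ell$. For $a\ge1$, $\mathrm{Tr}_a(T)=T+T^q+\cdots+T^{q^{a-1}}$. Fix integers $j,k\ge1$ with $n=j+k$, $\gcd(j,k)=1$ and $p\nmid j$, and let $\alpha\in\mathbb{F}_p$ be the inverse of $j$ modulo $p$. The basic function field is $F=K(x,y)$ where $x$ is transcendental over $K$ and $y$ is algebraic over $K(x)$ with $\mathrm{Tr}_j(y/x^{q^k})+\mathrm{Tr}_k(y^{q^j}/x)=1$. $u\in F$ is the unique element with $y/x^{q^k}=\mathrm{Tr}_k(u)+\alpha$ and $y^{q^j}/x=-\mathrm{Tr}_j(u)$. *)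

(* Defs.v *)
From HB Require Import structures.
From mathcomp Require Import all_boot all_order all_algebra.
Set Implicit Arguments. Unset Strict Implicit. Unset Printing Implicit Defensive.
Import GRing.Theory.
Local Open Scope ring_scope.

Definition trq (R : pzRingType) (q a : nat) (t : R) : R :=
  \sum_(i < a) t ^+ (q ^ i)%N.

Definition subfield_closed (L : fieldType) (P : L -> Prop) : Prop :=
  [/\ P 1, (forall a b, P a -> P b -> P (a - b)),
      (forall a b, P a -> P b -> P (a * b)) & (forall a, P a -> P a^-1)].

(* t lies in the subfield of L generated by the image of iota : K -> L
   together with the elements of S, i.e. t is in K(S). *)
Definition in_genfield (K L : fieldType) (iota : K -> L) (S : seq L) (t : L)
  : Prop :=
  forall P : L -> Prop, subfield_closed P ->
    (forall c, P (iota c)) -> (forall s, s \in S -> P s) -> P t.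

Definition transcendental_over (K L : fieldType) (iota : {rmorphism K -> L})
  (x : L) : Prop :=
  forall P : {poly K}, P != 0 -> (map_poly iota P).[x] != 0.

(* K is F_ell (a field with exactly ell elements, of characteristic p) or
   an algebraic closure of F_ell (algebraically closed, and algebraic over
   the prime field F_p, i.e. every element is fixed by some p^m-Frobenius). *)
Definition is_Fell_or_closure (K : fieldType) (p ell : nat) : Prop :=
  p \in [pchar K] /\
  ((exists s : seq K, [/\ uniq s, size s = ell & forall t, t \in s])
   \/ (GRing.closed_field_axiom K /\
       forall t : K, exists m : nat, (0 < m)%N /\ t ^+ (p ^ m) = t)).

(* Main.v *)
Require Import Defs.
From HB Require Import structures.
From mathcomp Require Import all_boot all_order all_algebra.
From mathcomp Require Import zify ring.
Import GRing.Theory.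
Local Open Scope ring_scope.


Section Frob.
Variables (L : fieldType) (q : nat).
Hypothesis hq : [pchar L].-nat q.

Lemma qnat m : [pchar L].-nat (q ^ m)%N.
Proof. by rewrite pnatX hq. Qed.

Lemma qpos m : (0 < q ^ m)%N.
Proof. by case/andP: (qnat m). Qed.

Lemma frD m (s t : L) : (s + t) ^+ (q ^ m) = s ^+ (q ^ m) + t ^+ (q ^ m).
Proof. by rewrite exprDn_pchar // qnat. Qed.

Lemma frN m (t : L) : (- t) ^+ (q ^ m) = - t ^+ (q ^ m).
Proof. by rewrite exprNn_pchar // qnat. Qed.

Lemma frB m (s t : L) : (s - t) ^+ (q ^ m) = s ^+ (q ^ m) - t ^+ (q ^ m).
Proof. by rewrite frD frN. Qed.

Lemma fr0 m : (0 : L) ^+ (q ^ m) = 0.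
Proof. by rewrite expr0n eqn0Ngt qpos. Qed.

Lemma frsum m n (F : 'I_n -> L) :
  (\sum_(i < n) F i) ^+ (q ^ m) = \sum_(i < n) (F i) ^+ (q ^ m).
Proof. exact: (big_morph (fun t : L => t ^+ (q ^ m)) (frD m) (fr0 m)). Qed.

Lemma frfr a b (t : L) : (t ^+ (q ^ a)) ^+ (q ^ b) = t ^+ (q ^ (a + b)).
Proof. by rewrite -exprM -expnD. Qed.

Lemma trq_split a b (t : L) :
  trq q (a + b) t = trq q a t + (trq q b t) ^+ (q ^ a).
Proof.
rewrite /trq big_split_ord /= frsum; congr (_ + _); apply: eq_bigr => i _.
by rewrite frfr addnC.
Qed.

Lemma trq_frob a m (t : L) : (trq q a t) ^+ (q ^ m) = trq q a (t ^+ (q ^ m)).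
Proof.
rewrite /trq frsum; apply: eq_bigr => i _; by rewrite !frfr addnC.
Qed.

Lemma trqB a (s t : L) : trq q a (s - t) = trq q a s - trq q a t.
Proof. by rewrite /trq -sumrB; apply: eq_bigr => i _; rewrite frB. Qed.

Lemma trqS a (t : L) : trq q a.+1 t = trq q a t + t ^+ (q ^ a).
Proof. by rewrite /trq big_ord_recr. Qed.

Lemma trq_tele a (t : L) : (trq q a t) ^+ q - trq q a t = t ^+ (q ^ a) - t.
Proof.
have fq : forall s : L, s ^+ q = s ^+ (q ^ 1) by move=> s; rewrite expn1.
elim: a => [|a IH].
  by rewrite /trq big_ord0 fq fr0 subrr expn0 expr1 subrr.
rewrite trqS fq frD -!fq -exprM -expnSr opprD addrACA IH.
by rewrite addrC addrA subrK.
Qed.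

End Frob.

Section SubF.
Variables (L : fieldType) (P : L -> Prop).
Hypothesis HP : subfield_closed P.

Lemma sf1 : P 1. Proof. by case: HP. Qed.
Lemma sfB a b : P a -> P b -> P (a - b). Proof. by case: HP => _ h _ _; apply: h. Qed.
Lemma sfM a b : P a -> P b -> P (a * b). Proof. by case: HP => _ _ h _; apply: h. Qed.
Lemma sfV a : P a -> P a^-1. Proof. by case: HP => _ _ _ h; apply: h. Qed.
Lemma sf0 : P 0. Proof. by rewrite -(subrr 1); apply: sfB; apply: sf1. Qed.
Lemma sfN a : P a -> P (- a). Proof. by move=> h; rewrite -sub0r; apply: sfB => //; apply: sf0. Qed.
Lemma sfD a b : P a -> P b -> P (a + b).
Proof. by move=> ha hb; rewrite -(opprK b); apply: sfB => //; apply: sfN. Qed.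
Lemma sfdiv a b : P a -> P b -> P (a / b). Proof. by move=> ha hb; apply: sfM => //; apply: sfV. Qed.
Lemma sfX a n : P a -> P (a ^+ n).
Proof. by move=> ha; elim: n => [|n IH]; [rewrite expr0; apply: sf1 | rewrite exprS; apply: sfM]. Qed.
Lemma sfnat n : P n%:R.
Proof. elim: n => [|n IH]; [exact: sf0 | rewrite -addn1 natrD; apply: sfD => //; apply: sf1]. Qed.
Lemma sfsum n (F : 'I_n -> L) : (forall i, P (F i)) -> P (\sum_(i < n) F i).
Proof. move=> h; apply: (big_ind P) => //; [exact: sf0 | exact: sfD]. Qed.
End SubF.

Lemma euclid (Pn : nat -> Prop) :
  (forall m d, Pn m -> Pn (m + d)%N -> Pn d) ->
  forall a b, Pn a -> Pn b -> Pn (gcdn a b).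
Proof.
move=> H a b; move: {2}(a + b)%N (leqnn (a + b)) => s.
elim: s a b => [|s IH] a b.
  by rewrite leqn0 addn_eq0 => /andP[/eqP-> /eqP->].
move=> hs ha hb.
case: a hs ha => [|a] hs ha; first by rewrite gcd0n.
case: b hs hb => [|b] hs hb; first by rewrite gcdn0.
case: (leqP a b) => hab.
  have e : b.+1 = (a.+1 + (b - a))%N by rewrite addSn subnKC.
  rewrite e gcdnDl; apply: IH; [lia| done | apply: (H a.+1); rewrite -?e //].
have e : a.+1 = (b.+1 + (a - b))%N by rewrite addSn subnKC // ltnW.
rewrite e gcdnC gcdnDl gcdnC; apply: IH; [lia | apply: (H b.+1); rewrite -?e // | done].
Qed.
Section Core.
Variables (L : fieldType) (q j k : nat) (x y u c : L).
Hypothesis hq : [pchar L].-nat q.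
Hypotheses (x0 : x != 0) (y0 : y != 0) (hjk : coprime j k).
Local Notation Q := (q ^ (j + k))%N.
Local Notation X := (x ^+ (Q - 1)).
Local Notation Y := (y ^+ (Q - 1)).
Hypothesis w0 : 1 - X != 0.
Hypothesis Hcurve : trq q j (y / x ^+ (q ^ k)) + trq q k (y ^+ (q ^ j) / x) = 1.
Hypothesis Hu1 : y / x ^+ (q ^ k) = trq q k u + c.
Hypothesis Hu2 : y ^+ (q ^ j) / x = - trq q j u.
Local Notation a := (y / x ^+ (q ^ k)).
Local Notation b := (y ^+ (q ^ j) / x).

Lemma powQ (t : L) : t ^+ Q = t * t ^+ (Q - 1).
Proof. by rewrite -exprS subn1 prednK // (qpos _ _ hq _). Qed.

Lemma nzs : ((x != 0) = true) * ((y != 0) = true) * (forall n, (x ^+ n != 0) = true)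
  * (forall n m, (x ^+ n ^+ m != 0) = true) * (true && true = true).
Proof. by do !split=> //; move=> *; rewrite !expf_neq0. Qed.

Lemma a0 : a != 0.
Proof. by rewrite mulf_neq0 // invr_neq0 // expf_neq0. Qed.

Lemma aj : a ^+ (q ^ j) = y ^+ (q ^ j) / x ^+ Q.
Proof. by rewrite exprMn exprVn -exprM -expnD addnC. Qed.

Lemma bdef : b = X * a ^+ (q ^ j).
Proof.
rewrite aj powQ; field.
by rewrite ?nzs.
Qed.

Lemma bk : b ^+ (q ^ k) = Y * a.
Proof.
rewrite exprMn exprVn -exprM -expnD powQ; field.
by rewrite ?nzs.
Qed.

Lemma aQ : a ^+ Q = (Y / X ^+ (q ^ k)) * a.
Proof.
have e : (x ^+ (q ^ k)) ^+ Q = x ^+ (q ^ k) * X ^+ (q ^ k).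
  by rewrite -exprM mulnC exprM powQ exprMn.
rewrite exprMn exprVn e (powQ y); field.
by rewrite ?nzs.
Qed.

Lemma frDq (s t : L) : (s + t) ^+ q = s ^+ q + t ^+ q.
Proof. by rewrite exprDn_pchar. Qed.

Lemma ajr : a ^+ (q ^ j) = ((1 - Y) / (1 - X)) * a.
Proof.
have E := congr1 (fun t => t ^+ q - t) Hcurve.
rewrite /= frDq opprD addrACA !trq_tele // expr1n subrr bk bdef in E.
have E2 : a ^+ (q ^ j) * (1 - X) = a * (1 - Y).
  by apply/eqP; rewrite -subr_eq0 -E; apply/eqP; ring.
apply: (mulIf w0); rewrite E2; field.
by rewrite w0 ?nzs.
Qed.

Section Fwd.
Variable P : L -> Prop.
Hypothesis HP : subfield_closed P.
Hypothesis Pc : P c.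
Hypothesis PX : P X.
Hypothesis PY : P Y.

Definition Tp m := exists r, P r /\ a ^+ (q ^ m) = r * a.

Lemma Tsub m d : Tp m -> Tp (m + d) -> Tp d.
Proof.
move=> [r1 [P1 E1]] [r2 [P2 E2]].
have r10 : r1 != 0.
  apply/eqP=> r1e; move: E1; rewrite r1e mul0r => /eqP; rewrite expf_eq0 (negbTE a0).
  by rewrite andbF.
have rq0 : r1 ^+ (q ^ d) != 0 by rewrite expf_neq0.
exists (r2 / r1 ^+ (q ^ d)); split; first by apply: sfdiv => //; apply: sfX.
rewrite -frfr // E1 exprMn in E2.
apply: (mulfI rq0); rewrite E2; field; by rewrite rq0 ?nzs.
Qed.

Lemma Tj : Tp j.
Proof.
exists ((1 - Y) / (1 - X)); split; last exact: ajr.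
by apply: sfdiv => //; apply: sfB => //; apply: sf1.
Qed.

Lemma Tn : Tp (j + k).
Proof.
exists (Y / X ^+ (q ^ k)); split; last exact: aQ.
by apply: sfdiv => //; apply: sfX.
Qed.

Lemma T1 : Tp 1.
Proof.
have := euclid Tp Tsub _ _ Tj Tn.
by rewrite gcdnDl (eqP hjk).
Qed.

Lemma Tall i : Tp i.
Proof.
elim: i => [|i [r [Pr Er]]].
  by exists 1; split; [apply: sf1 | rewrite expn0 expr1 mul1r].
have [g [Pg Eg]] := T1.
exists (r ^+ (q ^ 1) * g); split; first by apply: sfM => //; apply: sfX.
by rewrite -addn1 -frfr Er exprMn Eg !mulrA.
Qed.

Lemma sumT m (F : 'I_m -> L) :
  (forall i, exists r, P r /\ F i = r * a) ->
  exists R, P R /\ \sum_(i < m) F i = R * a.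
Proof.
elim: m F => [|m IH] F HF.
  by exists 0; split; [apply: sf0 | rewrite big_ord0 mul0r].
have [R [PR ER]] := IH (fun i => F (widen_ord (leqnSn m) i)) (fun i => HF _).
have [r [Pr Er]] := HF ord_max.
exists (R + r); split; first by apply: sfD.
by rewrite big_ord_recr /= ER Er -mulrDl.
Qed.

Lemma Pa : P a.
Proof.
have [R1 [P1 E1]] : exists R, P R /\ trq q j a = R * a.
  by apply: sumT => i; apply: Tall.
have [R2 [P2 E2]] : exists R, P R /\ trq q k b = R * a.
  apply: sumT => i; have [r [Pr Er]] := Tall (j + i).
  exists (X ^+ (q ^ i) * r); split; first by apply: sfM => //; apply: sfX.
  by rewrite bdef exprMn frfr // Er !mulrA.
have Hc := Hcurve; rewrite E1 E2 -mulrDl in Hc.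
have R0 : R1 + R2 != 0.
  by apply/eqP=> e; move: Hc; rewrite e mul0r => /eqP; rewrite eq_sym oner_eq0.
have -> : a = (R1 + R2)^-1 by rewrite -[LHS](mulKf R0) Hc mulr1.
exact: (sfV _ _ HP _ (sfD _ _ HP _ _ P1 P2)).
Qed.

Lemma Pb : P b.
Proof. by rewrite bdef; apply: sfM => //; apply: sfX => //; apply: Pa. Qed.

Lemma Vsub m d : P (trq q m u) -> P (trq q (m + d) u) -> P (trq q d u).
Proof.
move=> h1 h2.
rewrite trq_split // in h2.
have h3 : P ((trq q d u) ^+ (q ^ m)).
  by rewrite -(addKr (trq q m u) (_ ^+ _)); apply: sfD => //; apply: sfN.
have -> : trq q d u = (trq q d u) ^+ (q ^ m) - trq q d ((trq q m u) ^+ q - trq q m u).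
  by rewrite trq_tele // trqB // trq_frob // opprB addrC subrK.
apply: sfB => //; rewrite /trq; apply: sfsum => // i; apply: sfX => //.
by apply: sfB => //; apply: sfX.
Qed.

Lemma Pu : P u.
Proof.
have Vk : P (trq q k u).
  have -> : trq q k u = a - c by rewrite Hu1 addrK.
  by apply: sfB => //; apply: Pa.
have Vj : P (trq q j u).
  by rewrite -(opprK (trq q j u)) -Hu2; apply: sfN => //; apply: Pb.
have := euclid (fun m => P (trq q m u)) Vsub _ _ Vk Vj.
by rewrite gcdnC (eqP hjk) /trq big_ord1 expn0 expr1.
Qed.
End Fwd.

Section Bwd.
Variable P : L -> Prop.
Hypothesis HP : subfield_closed P.
Hypothesis Pc : P c.
Hypothesis Pu : P u.

Lemma Pa' : P a. Proof. by rewrite Hu1; apply: sfD => //; rewrite /trq; apply: sfsum => // i; apply: sfX. Qed.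
Lemma Pb' : P b. Proof. by rewrite Hu2; apply: sfN => //; rewrite /trq; apply: sfsum => // i; apply: sfX. Qed.

Lemma PY' : P Y.
Proof.
have -> : Y = b ^+ (q ^ k) / a by rewrite bk mulfK // a0.
by apply: sfdiv => //; [apply: sfX => //; apply: Pb' | apply: Pa'].
Qed.

Lemma PX' : P X.
Proof.
have -> : X = b / a ^+ (q ^ j) by rewrite bdef mulfK // expf_neq0 // a0.
by apply: sfdiv => //; [apply: Pb' | apply: sfX => //; apply: Pa'].
Qed.
End Bwd.
End Core.
Theorem lemma2p9 (p e n j k : nat) (K L : fieldType) (iota : {rmorphism K -> L})
  (x y u : L) :
  prime p -> (0 < e)%N -> (2 <= n)%N ->
  is_Fell_or_closure K p ((p ^ e) ^ n)%N ->
  (1 <= j)%N -> (1 <= k)%N -> n = (j + k)%N -> coprime j k -> ~~ (p %| j)%N ->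
  transcendental_over iota x ->
  trq (p ^ e) j (y / x ^+ ((p ^ e) ^ k)) + trq (p ^ e) k (y ^+ ((p ^ e) ^ j) / x) = 1 ->
  in_genfield iota [:: x; y] u ->
  y / x ^+ ((p ^ e) ^ k) = trq (p ^ e) k u + (j%:R)^-1 ->
  y ^+ ((p ^ e) ^ j) / x = - trq (p ^ e) j u ->
  let q := (p ^ e)%N in
  let w := - x ^+ (q ^ n - 1) in
  let z := - y ^+ (q ^ n - 1) in
  forall t : L, in_genfield iota [:: u] t <-> in_genfield iota [:: z; w] t.
Proof.
move=> hp he hn [chK _] hj hk hnjk hjk hpj htr Hcurve _ Hu1 Hu2 q w z t.
subst n; rewrite /w /z /q {w z q}.
have chL : p \in [pchar L] by exact: rmorph_pchar chK.
have hq : [pchar L].-nat (p ^ e)%N.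
  by rewrite (eq_pnat _ (pcharf_eq chL)) pnatX pnat_id.
have x0 : x != 0.
  have := htr 'X; rewrite polyX_eq0 map_polyX hornerX; exact.
have y0 : y != 0.
  apply/eqP=> ye; move: Hcurve; rewrite ye mul0r expr0n eqn0Ngt (qpos _ _ hq) mul0r.
  have t0 : forall m, trq (p ^ e) m (0 : L) = 0.
    by move=> m; rewrite /trq big1 // => i _; rewrite (fr0 _ _ hq).
  by rewrite !t0 addr0 => /eqP; rewrite eq_sym oner_eq0.
have Qgt : (0 < (p ^ e) ^ (j + k) - 1)%N.
  have h1 : (p <= (p ^ e) ^ (j + k))%N.
    rewrite -expnM -{1}(expn1 p); apply: leq_pexp2l; first exact: prime_gt0.
    by rewrite muln_gt0 he /=; lia.
  have := prime_gt1 hp; lia.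
have w0 : 1 - x ^+ ((p ^ e) ^ (j + k) - 1) != 0.
  set m := ((p ^ e) ^ (j + k) - 1)%N.
  have P0 : (1 - 'X ^+ m : {poly K}) != 0.
    apply/eqP=> h; have := congr1 (fun P => P.[0]) h.
    rewrite /= !hornerE expr0n eqn0Ngt Qgt subr0 => /eqP; by rewrite oner_eq0.
  have := htr _ P0.
  by rewrite rmorphB rmorph1 /= map_polyXn !hornerE.
have Pc : forall P : L -> Prop, subfield_closed P -> P (j%:R)^-1.
  by move=> P HP; apply: (sfV _ _ HP); apply: sfnat.
split=> H P HP Hc HS.
  apply: (H P HP Hc) => s; rewrite inE => /eqP ->.
  apply: (Pu _ _ _ _ _ _ _ _ hq x0 y0 hjk w0 Hcurve Hu1 Hu2 P HP (Pc P HP)).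
    by rewrite -[X in P X]opprK; apply: (sfN _ _ HP); apply: HS; rewrite !inE eqxx orbT.
  by rewrite -[X in P X]opprK; apply: (sfN _ _ HP); apply: HS; rewrite !inE eqxx.
apply: (H P HP Hc) => s; rewrite !inE => /orP[] /eqP ->; apply: (sfN _ _ HP).
  by apply: (PY' _ _ _ _ _ _ _ _ hq x0 y0 Hu1 Hu2 P HP (Pc P HP)); apply: HS; rewrite inE.
by apply: (PX' _ _ _ _ _ _ _ _ hq x0 y0 Hu1 Hu2 P HP (Pc P HP)); apply: HS; rewrite inE.
Qed.
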